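(* (i) Let $L$ be a lattice, let $\gamma$ be a congruence relation of $L$, and let $K=L/\gamma$ be the quotient lattice, with canonical surjection $u\mapsto [u]_\gamma$. For every congruence relation $\alpha$ of $L$, the relation \[ \alpha/\gamma=\bigl\{([u]_\gamma,[v]_\gamma) \mid u,v\in L,\ (u,v)\in\alpha\bigr\} \] is a tolerance relation of $K$. (ii) Conversely, for every lattice $K$ and every tolerance relation $\tau$ of $K$, there exist a lattice $L$, congruence relations $\alpha$ and $\gamma$ of $L$, and a lattice isomorphism $\varphi\colon L/\gamma\to K$ such that \[ \tau=\varphi(\alpha/\gamma)=\bigl\{(\varphi(X),\varphi(Y)) \mid (X,Y)\in\alpha/\gamma\bigr\}. \]
   Context: A tolerance relation of a lattice $L$ is a binary relation $\rho\subseteq L\times L$ that is reflexive, symmetric, and has the Substitution Properties: if $(a,b)\in\rho$ and $(c,d)\in\rho$ then $(a\vee c,b\vee d)\in\rho$ and $(a\wedge c,b\wedge d)\in\rho$. A congruence relation is a transitive tolerance. $[u]_\gamma$ denotes the $\gamma$-class of $u$. *)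

(* Defs.v *)
From Stdlib Require Import ClassicalEpsilon FunctionalExtensionality
  PropExtensionality ProofIrrelevance.



Record lattice := Lattice {
  car :> Type;
  join : car -> car -> car;
  meet : car -> car -> car;
  joinC : forall x y, join x y = join y x;
  joinA : forall x y z, join x (join y z) = join (join x y) z;
  meetC : forall x y, meet x y = meet y x;
  meetA : forall x y z, meet x (meet y z) = meet (meet x y) z;
  join_meet : forall x y, join x (meet x y) = x;
  meet_join : forall x y, meet x (join x y) = x
}.

Arguments join {l} _ _.
Arguments meet {l} _ _.

Definition relation (L : lattice) := L -> L -> Prop.
Arguments relation : clear implicits.

Definition tolerance (L : lattice) (rho : relation L) : Prop :=
  (forall a, rho a a) /\
  (forall a b, rho a b -> rho b a) /\
  (forall a b c d, rho a b -> rho c d ->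
      rho (join a c) (join b d) /\ rho (meet a c) (meet b d)).

Definition congruence (L : lattice) (rho : relation L) : Prop :=
  tolerance L rho /\ (forall a b c, rho a b -> rho b c -> rho a c).

Definition lattice_hom (L K : lattice) (f : L -> K) : Prop :=
  (forall x y, f (join x y) = join (f x) (f y)) /\
  (forall x y, f (meet x y) = meet (f x) (f y)).

Definition lattice_iso (L K : lattice) (f : L -> K) : Prop :=
  lattice_hom L K f /\ (forall x y, f x = f y -> x = y) /\
  (forall y, exists x, f x = y).

Section Quotient.
Variables (L : lattice) (g : relation L) (Hg : congruence L g).

Definition qcar := { X : L -> Prop | exists u, X = g u }.

Definition qclass (u : L) : qcar := exist _ (g u) (ex_intro _ u eq_refl).

Definition qrep (X : qcar) : L :=
  proj1_sig (constructive_indefinite_description _ (proj2_sig X)).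

Lemma qrep_spec X : proj1_sig X = g (qrep X).
Proof.
unfold qrep; destruct (constructive_indefinite_description _ _); auto.
Qed.

Lemma qclass_rep X : qclass (qrep X) = X.
Proof.
assert (E := qrep_spec X).
unfold qclass; revert E; generalize (qrep X); intros u E.
destruct X as [X HX]; simpl in E; subst X.
f_equal; apply proof_irrelevance.
Qed.

Lemma qclass_eq u v : g u v -> qclass u = qclass v.
Proof.
destruct Hg as [[Hr [Hs _]] Ht]; intros H.
assert (E : g u = g v).
{ apply functional_extensionality; intro w; apply propositional_extensionality;
  split; intro H'; eauto. }
unfold qclass; revert E; generalize (ex_intro (fun w => g u = g w) u eq_refl).
intros p E; revert p; rewrite E; intros p; f_equal; apply proof_irrelevance.
Qed.

Lemma qclass_eq_inv u v : qclass u = qclass v -> g u v.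
Proof.
destruct Hg as [[Hr [Hs _]] Ht]; intros H.
assert (E : g u = g v) by (apply (f_equal (@proj1_sig _ _)) in H; exact H).
apply Hs; rewrite <- E; apply Hr.
Qed.

Definition qjoin (X Y : qcar) : qcar := qclass (join (qrep X) (qrep Y)).
Definition qmeet (X Y : qcar) : qcar := qclass (meet (qrep X) (qrep Y)).

Lemma qrep_class u : g (qrep (qclass u)) u.
Proof.
apply qclass_eq_inv; apply qclass_rep.
Qed.

Lemma qjoin_class u v : qjoin (qclass u) (qclass v) = qclass (join u v).
Proof.
destruct Hg as [[Hr [Hs Hc]] Ht]; apply qclass_eq.
apply Hc; apply qrep_class.
Qed.

Lemma qmeet_class u v : qmeet (qclass u) (qclass v) = qclass (meet u v).
Proof.
destruct Hg as [[Hr [Hs Hc]] Ht]; apply qclass_eq.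
apply Hc; apply qrep_class.
Qed.

Ltac qdestr X := rewrite <- (qclass_rep X); generalize (qrep X); clear X; intro X.

Lemma qjoinC X Y : qjoin X Y = qjoin Y X.
Proof. qdestr X; qdestr Y; rewrite !qjoin_class, joinC; auto. Qed.
Lemma qjoinA X Y Z : qjoin X (qjoin Y Z) = qjoin (qjoin X Y) Z.
Proof. qdestr X; qdestr Y; qdestr Z; rewrite !qjoin_class, joinA; auto. Qed.
Lemma qmeetC X Y : qmeet X Y = qmeet Y X.
Proof. qdestr X; qdestr Y; rewrite !qmeet_class, meetC; auto. Qed.
Lemma qmeetA X Y Z : qmeet X (qmeet Y Z) = qmeet (qmeet X Y) Z.
Proof. qdestr X; qdestr Y; qdestr Z; rewrite !qmeet_class, meetA; auto. Qed.
Lemma qjoin_meet X Y : qjoin X (qmeet X Y) = X.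
Proof. qdestr X; qdestr Y; rewrite qmeet_class, qjoin_class, join_meet; auto. Qed.
Lemma qmeet_join X Y : qmeet X (qjoin X Y) = X.
Proof. qdestr X; qdestr Y; rewrite qjoin_class, qmeet_class, meet_join; auto. Qed.

Definition quotient_lattice : lattice :=
  @Lattice qcar qjoin qmeet qjoinC qjoinA qmeetC qmeetA qjoin_meet qmeet_join.

Definition quot_rel (alpha : relation L) : relation quotient_lattice :=
  fun X Y => exists u v, alpha u v /\ X = qclass u /\ Y = qclass v.

End Quotient.

(* Main.v *)
Require Import Defs.
From Stdlib Require Import ProofIrrelevance.

Section Basics.
Variable K : lattice.

Lemma meet_idem (x : K) : meet x x = x.
Proof. rewrite <- (join_meet K x x) at 2. apply meet_join. Qed.
Lemma join_idem (x : K) : join x x = x.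
Proof. rewrite <- (meet_join K x x) at 2. apply join_meet. Qed.
Lemma le_join (a b : K) : meet a b = a -> join a b = b.
Proof. intro H. rewrite <- H, joinC, meetC. apply join_meet. Qed.
Lemma join_le (a b : K) : join a b = b -> meet a b = a.
Proof. intro H. rewrite <- H. apply meet_join. Qed.
Lemma join_mono (a b c d : K) : join a b = b -> join c d = d ->
  join (join a c) (join b d) = join b d.
Proof.
  intros H1 H2.
  rewrite <- (joinA K a c), (joinA K c b d), (joinC K c b), <- (joinA K b c d), H2.
  rewrite (joinA K a b d), H1. reflexivity.
Qed.
Lemma meet_mono (a b c d : K) : meet a b = a -> meet c d = c ->
  meet (meet a c) (meet b d) = meet a c.
Proof.
  intros H1 H2.
  rewrite <- (meetA K a c), (meetA K c b d), (meetC K c b), <- (meetA K b c d), H2.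
  rewrite (meetA K a b c), H1. reflexivity.
Qed.
End Basics.

Section Constr.
Variables (K : lattice) (tau : relation K) (Ht : tolerance K tau).

Record LT := MkLT { lx : K; lp : K; lq : K;
  lpx : meet lp lx = lp; lxq : meet lx lq = lx; ltau : tau lp lq }.

Lemma LT_eq (a b : LT) : lx a = lx b -> lp a = lp b -> lq a = lq b -> a = b.
Proof.
  destruct a, b; simpl; intros; subst. f_equal; apply proof_irrelevance.
Qed.

Lemma sub_meet (a b c d : K) : meet a b = a -> meet c d = c ->
  meet (meet a c) (meet b d) = meet a c.
Proof. apply meet_mono. Qed.
Lemma sub_join (a b c d : K) : meet a b = a -> meet c d = c ->
  meet (join a c) (join b d) = join a c.
Proof. intros H1 H2. apply join_le. apply join_mono; apply le_join; auto. Qed.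

Definition Ljoin (a b : LT) : LT.
Proof.
  refine (MkLT (join (lx a) (lx b)) (join (lp a) (lp b)) (join (lq a) (lq b)) _ _ _).
  - apply sub_join; apply lpx.
  - apply sub_join; apply lxq.
  - destruct Ht as [_ [_ Hs]]. apply Hs; apply ltau.
Defined.
Definition Lmeet (a b : LT) : LT.
Proof.
  refine (MkLT (meet (lx a) (lx b)) (meet (lp a) (lp b)) (meet (lq a) (lq b)) _ _ _).
  - apply sub_meet; apply lpx.
  - apply sub_meet; apply lxq.
  - destruct Ht as [_ [_ Hs]]. apply Hs; apply ltau.
Defined.

Definition LL : lattice.
Proof.
  refine (@Lattice LT Ljoin Lmeet _ _ _ _ _ _); intros; apply LT_eq; simpl;
  first [apply joinC | apply joinA | apply meetC | apply meetA | apply join_meet | apply meet_join].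
Defined.

Definition alphaR : relation LL := fun a b => lp a = lp b /\ lq a = lq b.
Definition gammaR : relation LL := fun a b => lx a = lx b.

Lemma alpha_cong : congruence LL alphaR.
Proof.
  unfold alphaR; split; [split; [|split]|]; simpl.
  - auto.
  - intros a b [H1 H2]; auto.
  - intros a b c d [H1 H2] [H3 H4]; simpl; rewrite H1, H2, H3, H4; auto.
  - intros a b c [H1 H2] [H3 H4]; split; congruence.
Qed.

Lemma gamma_cong : congruence LL gammaR.
Proof.
  unfold gammaR; split; [split; [|split]|]; simpl.
  - auto.
  - auto.
  - intros a b c d H1 H3; simpl; rewrite H1, H3; auto.
  - intros a b c H1 H3; congruence.
Qed.

Lemma tau_refl x : tau x x. Proof. destruct Ht as [H _]; auto. Qed.
Lemma tau_sym x y : tau x y -> tau y x. Proof. destruct Ht as [_ [H _]]; auto. Qed.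
Lemma tau_join a b c d : tau a b -> tau c d -> tau (join a c) (join b d).
Proof. destruct Ht as [_ [_ H]]; intros; apply H; auto. Qed.
Lemma tau_meet a b c d : tau a b -> tau c d -> tau (meet a c) (meet b d).
Proof. destruct Ht as [_ [_ H]]; intros; apply H; auto. Qed.

Lemma L1 a c : tau a c -> tau (meet a c) (join a c).
Proof.
  intro H.
  assert (H1 := tau_meet _ _ _ _ H (tau_refl c)).
  assert (H2 := tau_meet _ _ _ _ (tau_sym _ _ H) (tau_refl a)).
  rewrite meet_idem in H1, H2. rewrite (meetC K c a) in H2.
  assert (H3 := tau_join _ _ _ _ H1 H2).
  rewrite join_idem, (joinC K c a) in H3. exact H3.
Qed.

Lemma L2 p q x y : meet p x = p -> meet x q = x -> meet p y = p -> meet y q = y ->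
  tau p q -> tau x y.
Proof.
  intros Hpx Hxq Hpy Hyq H.
  assert (H1 := tau_join _ _ _ _ (tau_refl x) H).
  assert (H2 := tau_join _ _ _ _ (tau_refl y) (tau_sym _ _ H)).
  rewrite (joinC K x p), le_join, le_join in H1 by assumption.
  rewrite (joinC K y p), (le_join _ p y), le_join in H2 by assumption.
  (* H1 : tau x q, H2 : tau q y *)
  assert (H3 := tau_meet _ _ _ _ H1 H2).
  rewrite Hxq, (meetC K q y), Hyq in H3. exact H3.
Qed.

Lemma meet_join_le (x y : K) : meet (meet x y) x = meet x y.
Proof. rewrite (meetC K (meet x y) x), meetA, meet_idem; auto. Qed.
Lemma le_join_r (x y : K) : meet x (join x y) = x.
Proof. apply meet_join. Qed.

Lemma mj2 (x y : K) : meet (meet x y) y = meet x y.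
Proof. rewrite <- meetA, meet_idem; auto. Qed.
Lemma jm2 (x y : K) : meet y (join x y) = y.
Proof. rewrite joinC; apply meet_join. Qed.

Definition mkU (x y : K) (H : tau x y) : LT :=
  MkLT x (meet x y) (join x y) (meet_join_le x y) (le_join_r x y) (L1 x y H).

End Constr.

Theorem theorem2 :
  (* (i) *)
  (forall (L : lattice) (gamma : relation L) (Hgamma : congruence L gamma)
          (alpha : relation L),
      congruence L alpha ->
      tolerance _ (quot_rel L gamma Hgamma alpha)) /\
  (* (ii) *)
  (forall (K : lattice) (tau : relation K),
      tolerance K tau ->
      exists (L : lattice) (alpha gamma : relation L)
             (Hgamma : congruence L gamma),
        congruence L alpha /\
        exists phi : quotient_lattice L gamma Hgamma -> K,
          lattice_iso _ K phi /\
          (forall x y : K,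
             tau x y <->
             exists X Y, quot_rel L gamma Hgamma alpha X Y /\ x = phi X /\ y = phi Y)).
Proof.
  split.
  - intros L g Hg alpha [[Hr [Hs Hc]] _].
    unfold quot_rel; split; [|split].
    + intros X. exists (qrep L g X), (qrep L g X). rewrite qclass_rep. auto.
    + intros X Y (u & v & H & -> & ->). exists v, u. auto.
    + intros X Y Z W (u & v & H & -> & ->) (u' & v' & H' & -> & ->).
      simpl. rewrite !(qjoin_class L g Hg), !(qmeet_class L g Hg).
      destruct (Hc _ _ _ _ H H') as [Hj Hm]. split.
      * exists (join u u'), (join v v'); auto.
      * exists (meet u u'), (meet v v'); auto.
  - intros K tau Ht.
    exists (LL K tau Ht), (alphaR K tau Ht), (gammaR K tau Ht), (gamma_cong K tau Ht).
    split; [apply alpha_cong|].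
    set (g := gammaR K tau Ht).
    assert (Hg := gamma_cong K tau Ht).
    assert (Hrc : forall u, lx K tau (qrep _ g (qclass _ g u)) = lx K tau u)
      by (intro u; apply (qrep_class _ g Hg u)).
    exists (fun X => lx K tau (qrep _ g X)).
    split; [split; [split|split]|].
    + intros X Y; simpl. unfold qjoin. rewrite Hrc. reflexivity.
    + intros X Y; simpl. unfold qmeet. rewrite Hrc. reflexivity.
    + intros X Y H. rewrite <- (qclass_rep _ g X), <- (qclass_rep _ g Y).
      apply (qclass_eq _ g Hg). exact H.
    + intros y. exists (qclass _ g (mkU K tau Ht y y (tau_refl K tau Ht y))).
      rewrite Hrc. reflexivity.
    + intros x y. split.
      * intros H.
        set (u := mkU K tau Ht x y H).
        assert (Hyx : tau y x) by (apply (tau_sym K tau Ht); auto).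
        set (v := MkLT K tau y (meet x y) (join x y)
                    (mj2 K x y) (jm2 K x y)
                    (L1 K tau Ht x y H)).
        exists (qclass _ g u), (qclass _ g v). split; [|split].
        -- exists u, v. split; [split; reflexivity| auto].
        -- rewrite Hrc. reflexivity.
        -- rewrite Hrc. reflexivity.
      * intros (X & Y & (u & v & [Hp Hq] & -> & ->) & -> & ->).
        rewrite !Hrc.
        apply (L2 K tau Ht (lp K tau u) (lq K tau u)).
        -- apply lpx.
        -- apply lxq.
        -- rewrite Hp; apply lpx.
        -- rewrite Hq; apply lxq.
        -- apply ltau.
Qed.
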